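(* Let $(E,\langle\cdot,\cdot\rangle,\rho,\circ)$ be a pre-Courant algebroid over $M$ with Jacobiator $J$. Then $J\in C^{3}_{\mathcal D}(E,\operatorname{Ker}(\rho))$ and $\partial J=0$. Equivalently, $J^\flat\in C^4_{\mathcal D}(E)$ and $\mathcal D(J^\flat)=0$.
   Context: A Courant vector bundle over a smooth manifold $M$ is a vector bundle $E\to M$ with a fibrewise nondegenerate symmetric bilinear form $\langle\cdot,\cdot\rangle$ (extended $C^\infty(M)$-bilinearly to sections) and a bundle map $\rho:E\to TM$ such that $\rho\circ\rho^*=0$, where $\rho^*:T^*M\to E^*\cong E$ is the dual of $\rho$ followed by the identification $E^*\cong E$ via $\langle\cdot,\cdot\rangle$. A pre-Courant algebroid structure on it is an $\mathbb R$-bilinear operation $\circ$ on $\Gamma(E)$ such that for all $e_1,e_2,e_3\in\Gamma(E)$: (i) $\rho(e_1\circ e_2)=[\rho(e_1),\rho(e_2)]$; (ii) $\langle e_1\circ e_1,e_2\rangle=\frac12\rho(e_2)\langle e_1,e_1\rangle$; (iii) $\rho(e_1)\langle e_2,e_3\rangle=\langle e_1\circ e_2,e_3\rangle+\langle e_2,e_1\circ e_3\rangle$. Define $\mathcal D:C^\infty(M)\to\Gamma(E)$ by $\langle\mathcal Df,e\rangle=\rho(e)f$. The Jacobiator is $J(e_1,e_2,e_3)=e_1\circ(e_2\circ e_3)-(e_1\circ e_2)\circ e_3-e_2\circ(e_1\circ e_3)$. $C^k_{\mathcal D}(E)$ is the space of skew-symmetric $C^\infty(M)$-multilinear maps $\psi:\Gamma(E)^k\to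 C^\infty(M)$ with $\psi(\mathcal Df,e_2,\dots,e_k)=0$ for all $f\in C^\infty(M)$ (equivalently, sections of $\wedge^k\operatorname{Ker}(\rho)$ viewed in $\wedge^kE^*$ via $\langle\cdot,\cdot\rangle$). $C^k_{\mathcal D}(E,\operatorname{Ker}(\rho))$ is the space of $C^\infty(M)$-multilinear maps $\phi:\Gamma(E)^k\to\Gamma(E)$ such that (1) $\phi$ takes values in $\Gamma(\operatorname{Ker}\rho)$, (2) $\phi(\mathcal Df,e_2,\dots,e_k)=0$ for all $f$, (3) $(e_1,\dots,e_{k+1})\mapsto\langle\phi(e_1,\dots,e_k),e_{k+1}\rangle$ is totally skew-symmetric. For such $\phi$, $\phi^\flat\in C^{k+1}_{\mathcal D}(E)$ is $\phi^\flat(e_1,\dots,e_{k+1})=\langle\phi(e_1,\dots,e_k),e_{k+1}\rangle$. $\mathcal D:C^k_{\mathcal D}(E)\to C^{k+1}_{\mathcal D}(E)$: $\mathcal D\psi(e_1,\dots,e_{k+1})=\sum_{i=1}^{k+1}(-1)^{i+1}\rho(e_i)\psi(e_1,\dots,\widehat{e_i},\dots,e_{k+1})+\sum_{i<j}(-1)^{i+j}\psi(e_i\circ e_j,e_1,\dots,\widehat{e_i},\dots,\widehat{e_j},\dots,e_{k+1})$. $\partial:C^k_{\mathcal D}(E,\operatorname{Ker}\rho)\to C^{k+1}_{\mathcal D}(E,\operatorname{Ker}\rho)$: $\partial\phi(e_1,\dots,e_{k+1})=\sum_{i=1}^k(-1)^{i+1}e_i\circ\phi(e_1,\dots,\widehat{e_i},\dots,e_{k+1})+(-1)^{k+1}\phi(e_1,\dots,e_k)\circ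 e_{k+1}+\sum_{i<j}(-1)^{i+j}\phi(e_i\circ e_j,e_1,\dots,\widehat{e_i},\dots,\widehat{e_j},\dots,e_{k+1})$. *)

(* Defs.v *)
(* Algebraic model of a pre-Courant algebroid:
   C^oo(M) is an abstract commutative R-algebra A, Gamma(E) an A-module E,
   vector fields are derivations of A (Gamma(TM) = Der(C^oo(M))).
   k-ary maps Gamma(E)^k -> ... are encoded as functions on sequences,
   only their values on sequences of size k being relevant. *)
From HB Require Import structures.
From mathcomp Require Import all_boot all_order all_algebra.
From mathcomp Require Import reals.
Set Implicit Arguments. Unset Strict Implicit. Unset Printing Implicit Defensive.
Import Order.TTheory GRing.Theory Num.Theory.
Local Open Scope ring_scope.

Section PreCourant.
Variables (R : realType) (A : comAlgType R) (E : lmodType A).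

Definition is_derivation (X : A -> A) : Prop :=
  (forall (r : R) (f g : A), X (r *: f + g) = r *: X f + X g) /\
  (forall f g : A, X (f * g) = f * X g + g * X f).

Record is_preCourant (pair : E -> E -> A) (anchor : E -> A -> A)
    (circ : E -> E -> E) : Prop := {
  pair_linl : forall (a : A) x y z, pair (a *: x + y) z = a * pair x z + pair y z;
  pair_sym : forall x y, pair x y = pair y x;
  (* fibrewise nondegenerate: Gamma(E) -> Gamma(E^* ) is an isomorphism *)
  pair_nondeg : forall x, (forall y, pair x y = 0) -> x = 0;
  pair_onto : forall l : E -> A,
      (forall (a : A) x y, l (a *: x + y) = a * l x + l y) ->
      exists e, forall x, pair e x = l x;
  anchor_lin : forall (a : A) x y f, anchor (a *: x + y) f = a * anchor x f + anchor y f;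
  anchor_der : forall e, is_derivation (anchor e);
  (* rho o rho^* = 0 : rho^*(df) is the x with <x,e> = rho(e) f *)
  anchor_dual0 : forall f x, (forall e, pair x e = anchor e f) ->
      forall g, anchor x g = 0;
  circ_linl : forall (r : R) x y z,
      circ (r%:A *: x + y) z = r%:A *: circ x z + circ y z;
  circ_linr : forall (r : R) x y z,
      circ z (r%:A *: x + y) = r%:A *: circ z x + circ z y;
  axiom_i : forall e1 e2 f,
      anchor (circ e1 e2) f = anchor e1 (anchor e2 f) - anchor e2 (anchor e1 f);
  axiom_ii : forall e1 e2,
      pair (circ e1 e1) e2 = (2%:R^-1 : R) *: anchor e2 (pair e1 e1);
  axiom_iii : forall e1 e2 e3,
      anchor e1 (pair e2 e3) = pair (circ e1 e2) e3 + pair e2 (circ e1 e3)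
}.

Variables (pair : E -> E -> A) (anchor : E -> A -> A) (circ : E -> E -> E)
  (D : A -> E).

Definition rem_at (T : Type) (i : nat) (s : seq T) : seq T :=
  take i s ++ drop i.+1 s.

Definition swap_at (p q : nat) (s : seq E) : seq E :=
  set_nth 0 (set_nth 0 s p (nth 0 s q)) q (nth 0 s p).

Definition jac3 (e1 e2 e3 : E) : E :=
  circ e1 (circ e2 e3) - circ (circ e1 e2) e3 - circ e2 (circ e1 e3).
Definition jacobiator (s : seq E) : E := jac3 (nth 0 s 0) (nth 0 s 1) (nth 0 s 2).

Definition multilinE (k : nat) (phi : seq E -> E) : Prop :=
  forall s p (a : A) x y, size s = k -> (p < k)%N ->
    phi (set_nth 0 s p (a *: x + y)) =
      a *: phi (set_nth 0 s p x) + phi (set_nth 0 s p y).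

Definition multilinA (k : nat) (psi : seq E -> A) : Prop :=
  forall s p (a : A) x y, size s = k -> (p < k)%N ->
    psi (set_nth 0 s p (a *: x + y)) =
      a * psi (set_nth 0 s p x) + psi (set_nth 0 s p y).

Definition skewA (k : nat) (psi : seq E -> A) : Prop :=
  forall s p q, size s = k -> (p < k)%N -> (q < k)%N -> p != q ->
    psi (swap_at p q s) = - psi s.

Definition flat (k : nat) (phi : seq E -> E) : seq E -> A :=
  fun s => pair (phi (take k s)) (nth 0 s k).

Definition CkD (k : nat) (psi : seq E -> A) : Prop :=
  [/\ multilinA k psi, skewA k psi &
      forall f s, size s = k.-1 -> psi (D f :: s) = 0].

Definition CkE (k : nat) (phi : seq E -> E) : Prop :=
  [/\ multilinE k phi,
      (forall s, size s = k -> forall g, anchor (phi s) g = 0),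
      (forall f s, size s = k.-1 -> phi (D f :: s) = 0) &
      skewA k.+1 (flat k phi)].

(* D : C^k_D(E) -> C^{k+1}_D(E)  (0-based indices: (-1)^(i+1) -> (-1)^i) *)
Definition dcobA (k : nat) (psi : seq E -> A) : seq E -> A := fun s =>
  \sum_(0 <= i < k.+1) (-1) ^+ i * anchor (nth 0 s i) (psi (rem_at i s)) +
  \sum_(0 <= j < k.+1) \sum_(0 <= i < j)
     (-1) ^+ (i + j) * psi (circ (nth 0 s i) (nth 0 s j) :: rem_at i (rem_at j s)).

Definition dcobE (k : nat) (phi : seq E -> E) : seq E -> E := fun s =>
  \sum_(0 <= i < k) (-1) ^+ i *: circ (nth 0 s i) (phi (rem_at i s)) +
  (-1) ^+ k.+1 *: circ (phi (take k s)) (nth 0 s k) +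
  \sum_(0 <= j < k.+1) \sum_(0 <= i < j)
     (-1) ^+ (i + j) *: phi (circ (nth 0 s i) (nth 0 s j) :: rem_at i (rem_at j s)).

End PreCourant.

(* Main.v *)
Require Import Defs.
From HB Require Import structures.
From mathcomp Require Import all_boot all_order all_algebra.
From mathcomp Require Import reals.
From mathcomp Require Import ring.
Set Implicit Arguments. Unset Strict Implicit. Unset Printing Implicit Defensive.
Import Order.TTheory GRing.Theory Num.Theory.
Local Open Scope ring_scope.

Section Basic.
Variables (R : realType) (A : comAlgType R) (E : lmodType A)
    (pair : E -> E -> A) (anchor : E -> A -> A) (circ : E -> E -> E)
    (D : A -> E).
Hypothesis H : is_preCourant pair anchor circ.
Hypothesis HD : forall f e, pair (D f) e = anchor e f.

Lemma idem0 (V : zmodType) (p : V) : p = p + p -> p = 0.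
Proof. by move/(congr1 (fun t => t - p)); rewrite subrr addrK. Qed.

Lemma pairD x y z : pair (x + y) z = pair x z + pair y z.
Proof. by have := pair_linl H 1 x y z; rewrite scale1r mul1r. Qed.
Lemma pair0 z : pair 0 z = 0.
Proof. by apply: idem0; rewrite -pairD addr0. Qed.
Lemma pairN x z : pair (- x) z = - pair x z.
Proof. by apply/eqP; rewrite -addr_eq0 -pairD addNr pair0. Qed.
Lemma pairB x y z : pair (x - y) z = pair x z - pair y z.
Proof. by rewrite pairD pairN. Qed.
Lemma pairZ a x z : pair (a *: x) z = a * pair x z.
Proof. by have := pair_linl H a x 0 z; rewrite addr0 pair0 addr0. Qed.
Lemma pairDr x y z : pair z (x + y) = pair z x + pair z y.
Proof. by rewrite !(pair_sym H z) pairD. Qed.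
Lemma pair0r z : pair z 0 = 0.
Proof. by rewrite (pair_sym H) pair0. Qed.
Lemma pairNr x z : pair z (- x) = - pair z x.
Proof. by rewrite !(pair_sym H z) pairN. Qed.
Lemma pairBr x y z : pair z (x - y) = pair z x - pair z y.
Proof. by rewrite pairDr pairNr. Qed.
Lemma pairZr a x z : pair z (a *: x) = a * pair z x.
Proof. by rewrite !(pair_sym H z) pairZ. Qed.

Lemma eqE x y : (forall e, pair x e = pair y e) -> x = y.
Proof.
move=> h; apply/eqP; rewrite -subr_eq0; apply/eqP; apply: (pair_nondeg H) => e.
by rewrite pairB h subrr.
Qed.

Lemma anchorD x y f : anchor (x + y) f = anchor x f + anchor y f.
Proof. by have := anchor_lin H 1 x y f; rewrite scale1r mul1r. Qed.
Lemma anchor0 f : anchor 0 f = 0.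
Proof. by apply: idem0; rewrite -anchorD addr0. Qed.
Lemma anchorN x f : anchor (- x) f = - anchor x f.
Proof. by apply/eqP; rewrite -addr_eq0 -anchorD addNr anchor0. Qed.
Lemma anchorB x y f : anchor (x - y) f = anchor x f - anchor y f.
Proof. by rewrite anchorD anchorN. Qed.

Lemma anchorDf x f g : anchor x (f + g) = anchor x f + anchor x g.
Proof. by have := (anchor_der H x).1 1 f g; rewrite !scale1r. Qed.
Lemma anchor0f x : anchor x 0 = 0.
Proof. by apply: idem0; rewrite -anchorDf addr0. Qed.
Lemma anchorNf x f : anchor x (- f) = - anchor x f.
Proof. by apply/eqP; rewrite -addr_eq0 -anchorDf addNr anchor0f. Qed.
Lemma anchorBf x f g : anchor x (f - g) = anchor x f - anchor x g.
Proof. by rewrite anchorDf anchorNf. Qed.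

Lemma circDl x y z : circ (x + y) z = circ x z + circ y z.
Proof. by have := circ_linl H 1 x y z; rewrite scale1r !scale1r. Qed.
Lemma circ0l z : circ 0 z = 0.
Proof. by apply: idem0; rewrite -circDl addr0. Qed.
Lemma circNl x z : circ (- x) z = - circ x z.
Proof. by apply/eqP; rewrite -addr_eq0 -circDl addNr circ0l. Qed.
Lemma circBl x y z : circ (x - y) z = circ x z - circ y z.
Proof. by rewrite circDl circNl. Qed.
Lemma circDr x y z : circ z (x + y) = circ z x + circ z y.
Proof. by have := circ_linr H 1 x y z; rewrite scale1r !scale1r. Qed.
Lemma circ0r z : circ z 0 = 0.
Proof. by apply: idem0; rewrite -circDr addr0. Qed.
Lemma circNr x z : circ z (- x) = - circ z x.
Proof. by apply/eqP; rewrite -addr_eq0 -circDr addNr circ0r. Qed.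
Lemma circBr x y z : circ z (x - y) = circ z x - circ z y.
Proof. by rewrite circDr circNr. Qed.

Lemma DD f g : D (f + g) = D f + D g.
Proof. by apply: eqE => e; rewrite pairD !HD anchorDf. Qed.
Lemma DN f : D (- f) = - D f.
Proof. by apply: eqE => e; rewrite pairN !HD anchorNf. Qed.
Lemma DB f g : D (f - g) = D f - D g.
Proof. by rewrite DD DN. Qed.
Lemma D0 : D 0 = 0.
Proof. by apply: eqE => e; rewrite pair0 !HD anchor0f. Qed.

Lemma anchorD0 f g : anchor (D f) g = 0.
Proof. exact: (anchor_dual0 H (HD f)). Qed.

Lemma iiiL x y z : pair (circ x y) z = anchor x (pair y z) - pair y (circ x z).
Proof. by rewrite (axiom_iii H) addrK. Qed.

Lemma symP x y e : anchor e (pair x y) = pair (circ x y) e + pair (circ y x) e.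
Proof.
have h := axiom_ii H (x + y) e.
rewrite !circDl !circDr !pairD !(axiom_ii H) !pairDr !anchorDf (pair_sym H y x) in h.
set u := anchor e (pair x x) in h; set v := anchor e (pair y y) in h.
set w := anchor e (pair x y) in h *.
have h2 : (2%:R^-1 : R) *: (w + w) = w.
  rewrite -mulr2n -scaler_nat scalerA mulVf ?scale1r //.
  by rewrite pnatr_eq0.
have hc : forall a : A, (2%:R^-1 : R) *: a = (2%:R^-1 : R)%:A * a.
  by move=> a; rewrite mulr_algl.
move: hc; set c := (2%:R^-1 : R)%:A => hc; clearbody c.
rewrite !scalerDr !hc in h h2.
set P := pair (circ x y) e in h *; set Q := pair (circ y x) e in h *.
clearbody u v w P Q.
apply: (addrI (c * u + c * v)).
transitivity (c * u + P + (Q + c * v)); last ring.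
rewrite h -{1}h2; ring.
Qed.

Lemma symC x y : circ x y + circ y x = D (pair x y).
Proof. by apply: eqE => e; rewrite pairD HD symP. Qed.

Lemma circ_rD x f : circ x (D f) = D (anchor x f).
Proof.
apply: eqE => e; rewrite iiiL !HD (axiom_i H).
ring.
Qed.

Lemma circ_lD f x : circ (D f) x = 0.
Proof.
have := symC (D f) x; rewrite circ_rD HD => h.
by move/(congr1 (fun t => t - D (anchor x f))): h; rewrite addrK subrr.
Qed.


Ltac zmodE := apply: eqE => ?; rewrite ?(pairD, pairN, pairB, pair0); ring.

Notation J := (jac3 circ).

Lemma J12 a b c : J a b c = - J b a c.
Proof.
have h : circ (circ a b + circ b a) c = 0 by rewrite symC circ_lD.
rewrite circDl in h.
apply/eqP; rewrite -addr_eq0; apply/eqP; rewrite /jac3 -[RHS]oppr0 -h.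
zmodE.
Qed.

Lemma J23 a b c : J a b c = - J a c b.
Proof.
have h : circ a (circ b c + circ c b) - (circ (circ a b) c + circ c (circ a b))
   - (circ (circ a c) b + circ b (circ a c)) = 0.
  rewrite !symC circ_rD -!DB; rewrite (pair_sym H (circ a c)).
  have -> : anchor a (pair b c) - pair (circ a b) c - pair b (circ a c) = 0.
    by rewrite (axiom_iii H); ring.
  by rewrite D0.
rewrite circDr in h.
apply/eqP; rewrite -addr_eq0; apply/eqP; rewrite /jac3 -h.
zmodE.
Qed.

Lemma J34 a b c d : pair (J a b c) d = - pair (J a b d) c.
Proof.
rewrite /jac3 !pairB.
rewrite (iiiL a (circ b c) d) (iiiL b c (circ a d)) (iiiL b (circ a c) d).
rewrite (iiiL a c (circ b d)) (iiiL (circ a b) c d) (iiiL b c d) (iiiL a c d).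
rewrite !anchorBf !(axiom_i H).
rewrite !(pair_sym H _ c).
ring.
Qed.

Lemma Jcyc a b c d : pair (J a b c) d = - pair (J d a b) c.
Proof. by rewrite J34 J23 pairN J12 pairN opprK. Qed.

Lemma anchorJ a b c g : anchor (J a b c) g = 0.
Proof. rewrite /jac3 !anchorB !(axiom_i H) !anchorBf. ring. Qed.

Lemma JD f b c : J (D f) b c = 0.
Proof. by rewrite /jac3 !circ_lD circ0l circ0r !subr0. Qed.

Lemma Jrot w x y : J w x y = J x y w.
Proof. by rewrite J12 J23 opprK. Qed.

Lemma dJ a b c d : dcobE circ 3 (jacobiator circ) [:: a; b; c; d] = 0.
Proof.
rewrite /dcobE !big_nat_recr //= !big_geq //.
rewrite /jacobiator /rem_at /=.
rewrite (J12 (circ a c) b d) (J12 (circ b c) a d).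
rewrite (Jrot (circ a d)) (Jrot (circ b d)) (Jrot (circ c d)).
apply: eqE => e.
rewrite /jac3 !(circDr, circBr, circNr, circDl, circBl, circNl).
rewrite !(pairD, pairB, pairN, pairZ, pair0).
ring.
Qed.

Lemma dJflat a b c d e : dcobA anchor circ 4 (flat pair 3 (jacobiator circ)) [:: a; b; c; d; e] = 0.
Proof.
have h := congr1 (pair^~ e) (dJ a b c d).
rewrite /dcobE !big_nat_recr //= !big_geq // /jacobiator /rem_at /= in h.
rewrite !(pairD, pairZ, pair0) in h.
rewrite /dcobA !big_nat_recr //= !big_geq //.
rewrite /flat /jacobiator /rem_at /=.
rewrite (symP (J a b c) d e) !(axiom_iii H) !(Jcyc _ _ _ (circ _ e)).
apply: (etrans _ h).
rewrite /jac3 !(circDr, circBr, circNr, circDl, circBl, circNl) !(pairD, pairB, pairN, pairZ, pair0).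
ring.
Qed.

Lemma S01 x y z w : pair (J x y z) w = - pair (J y x z) w.
Proof. by rewrite J12 pairN. Qed.
Lemma S12 x y z w : pair (J x y z) w = - pair (J x z y) w.
Proof. by rewrite J23 pairN. Qed.
Lemma S23 x y z w : pair (J x y z) w = - pair (J x y w) z.
Proof. exact: J34. Qed.

Lemma skew4 : skewA 4 (flat pair 3 (jacobiator circ)).
Proof.
move=> s p q hs hp hq hpq.
case: s hs => [|a [|b [|c [|d [|? ?]]]]] // _.
rewrite /flat /swap_at /jacobiator.
case: p hp hpq => [|[|[|[|p]]]] // _; case: q hq => [|[|[|[|q]]]] // _ _ /=;
  first [ by rewrite S01
        | by rewrite S12
        | by rewrite S23
        | by rewrite S01 S12 S01 !opprK
        | by rewrite S12 S23 S12 !opprK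
        | by rewrite S01 S12 S23 S12 S01 !opprK ].
Qed.

Lemma lin3 u v a x y : J u v (a *: x + y) = a *: J u v x + J u v y.
Proof.
apply: eqE => e; rewrite (pairD (a *: J u v x)) pairZ J34 pairDr pairZr (J34 u v e x) (J34 u v e y).
ring.
Qed.
Lemma lin2 u w a x y : J u (a *: x + y) w = a *: J u x w + J u y w.
Proof.
rewrite J23 lin3 (J23 u x w) (J23 u y w) scalerN opprD.
by [].
Qed.
Lemma lin1 v w a x y : J (a *: x + y) v w = a *: J x v w + J y v w.
Proof.
rewrite J12 lin2 (J12 x v w) (J12 y v w) scalerN opprD.
by [].
Qed.

Lemma mlE : multilinE 3 (jacobiator circ).
Proof.
move=> s p a x y hs hp.
case: s hs => [|u [|v [|w [|? ?]]]] // _.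
case: p hp => [|[|[|p]]] // _ /=; rewrite /jacobiator /=.
- exact: lin1.
- exact: lin2.
- exact: lin3.
Qed.

Lemma mlA : multilinA 4 (flat pair 3 (jacobiator circ)).
Proof.
move=> s p a x y hs hp.
case: s hs => [|u [|v [|w [|z [|? ?]]]]] // _.
case: p hp => [|[|[|[|p]]]] // _; rewrite /flat /jacobiator /=.
- by rewrite lin1 pairD pairZ.
- by rewrite lin2 pairD pairZ.
- by rewrite lin3 pairD pairZ.
- by rewrite pairDr pairZr.
Qed.

End Basic.

Theorem theorem3p4 (R : realType) (A : comAlgType R) (E : lmodType A)
    (pair : E -> E -> A) (anchor : E -> A -> A) (circ : E -> E -> E)
    (D : A -> E) :
  is_preCourant pair anchor circ ->
  (forall f e, pair (D f) e = anchor e f) ->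
  [/\ CkE pair anchor D 3 (jacobiator circ),
      (forall s, size s = 4%N -> dcobE circ 3 (jacobiator circ) s = 0),
      CkD D 4 (flat pair 3 (jacobiator circ)) &
      (forall s, size s = 5%N ->
         dcobA anchor circ 4 (flat pair 3 (jacobiator circ)) s = 0)].
Proof.
move=> H HD; split.
- rewrite /CkE; split.
  + first [exact: (mlE H HD) | exact: (mlE H)].
  + move=> s hs g; exact: (anchorJ H).
  + move=> f s hs; case: s hs => [|b [|c [|? ?]]] // _.
    first [exact: (JD H HD) | exact: (JD H)].
  + first [exact: (skew4 H HD) | exact: (skew4 H)].
- move=> s hs; case: s hs => [|a [|b [|c [|d [|? ?]]]]] // _.
  first [exact: (dJ H HD) | exact: (dJ H)].
- split.
  + first [exact: (mlA H HD) | exact: (mlA H)].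
  + first [exact: (skew4 H HD) | exact: (skew4 H)].
  + move=> f s hs; case: s hs => [|b [|c [|d [|? ?]]]] // _.
    by rewrite /flat /jacobiator /= (JD H HD) (pair0 H).
- move=> s hs; case: s hs => [|a [|b [|c [|d [|e [|? ?]]]]]] // _.
  first [exact: (dJflat H HD) | exact: (dJflat H)].
Qed.
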